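(* Let $\mathbb{G},\mathbb{M}$ be graded groups, $T:\mathbb{G}\to\mathbb{M}$ an injective h-homomorphism and $H=T(\mathbb{G})$. The following are equivalent: (1) there exists a normal homogeneous subgroup $N$ of $\mathbb{M}$ complementary to $H$; (2) there exists an h-epimorphism $p:\mathbb{M}\to H$ with $p|_H=\mathrm{Id}_H$; (3) $T$ is an h-monomorphism.
   Context: Graded group: connected simply connected real Lie group with Lie algebra $V_1\oplus\cdots\oplus V_\iota$, $[V_i,V_j]\subset V_{i+j}$; dilations act by $r^i$ on $V_i$. h-homomorphism: group homomorphism commuting with dilations; h-epimorphism (resp. h-monomorphism): h-homomorphism having a right (resp. left) inverse which is an h-homomorphism. Homogeneous subgroup: closed connected simply connected Lie subgroup invariant under dilations (image $H$ is a homogeneous subgroup, itself a graded group). $N,H$ complementary: $NH=\mathbb{M}$ and $N\cap H=\{e\}$. *)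

(* Defs.v *)
From HB Require Import structures.
From mathcomp Require Import all_boot all_order all_algebra.
From mathcomp Require Import all_classical all_reals all_analysis.
Set Implicit Arguments. Unset Strict Implicit. Unset Printing Implicit Defensive.
Import Order.TTheory GRing.Theory Num.Theory.
Import numFieldNormedType.Exports.
Local Open Scope classical_set_scope.
Local Open Scope ring_scope.

(* Graded groups are modelled in exponential coordinates: a graded group is
   R^n (row vectors) with a polynomial group law with identity 0, together
   with dilations delta_r (x)_j = r^(w_j) x_j, where the weights w_j >= 1 are
   the degrees of a graded basis of V_1 (+) ... (+) V_iota, and the dilations
   are group automorphisms. *)

Inductive polyfn (R : realType) (m : nat) : ('rV[R]_m -> R) -> Prop :=
| pf_const (c : R) : polyfn (fun _ => c)
| pf_coord (i : 'I_m) : polyfn (fun x => x 0 i)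
| pf_add f g : polyfn f -> polyfn g -> polyfn (fun x => f x + g x)
| pf_mul f g : polyfn f -> polyfn g -> polyfn (fun x => f x * g x).

Definition dilw (R : realType) (n : nat) (w : 'I_n -> nat) (r : R)
  (x : 'rV[R]_n) : 'rV[R]_n := \row_i (r ^+ w i * x 0 i).

Record graded_group (R : realType) := GradedGroup {
  gdim : nat;
  gwt : 'I_gdim -> nat;
  gmul : 'rV[R]_gdim -> 'rV[R]_gdim -> 'rV[R]_gdim;
  ginv : 'rV[R]_gdim -> 'rV[R]_gdim;
  gwt_pos : forall i, (0 < gwt i)%N;
  gmulA : forall x y z, gmul x (gmul y z) = gmul (gmul x y) z;
  gmul0x : forall x, gmul 0 x = x;
  gmulx0 : forall x, gmul x 0 = x;
  gmulVx : forall x, gmul (ginv x) x = 0;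
  gmulxV : forall x, gmul x (ginv x) = 0;
  gmul_poly : forall i : 'I_gdim,
    polyfn (fun z : 'rV[R]_(gdim + gdim) => gmul (lsubmx z) (rsubmx z) 0 i);
  ginv_poly : forall i : 'I_gdim, polyfn (fun x => ginv x 0 i);
  gdil_mul : forall (r : R) x y, 0 < r ->
    dilw gwt r (gmul x y) = gmul (dilw gwt r x) (dilw gwt r y)
}.

Definition gcar (R : realType) (G : graded_group R) := 'rV[R]_(gdim G).
Definition gdil (R : realType) (G : graded_group R) (r : R) (x : gcar G)
  : gcar G := dilw (@gwt R G) r x.
Arguments gdil {R} G r x.

Definition hhom (R : realType) (G M : graded_group R) (f : gcar G -> gcar M)
  := (forall x y, f (gmul x y) = gmul (f x) (f y)) /\
     (forall (r : R) x, 0 < r -> f (gdil G r x) = gdil M r (f x)).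

Definition hmono (R : realType) (G M : graded_group R) (f : gcar G -> gcar M)
  := hhom f /\ exists g : gcar M -> gcar G, hhom g /\ forall x, g (f x) = x.

(* Homogeneous subgroup: closed, connected subgroup invariant under dilations
   (the Lie-subgroup and simple connectedness conditions are automatic). *)
Definition homogeneous_subgroup (R : realType) (M : graded_group R)
  (N : set (gcar M)) :=
  [/\ N 0,
      (forall x y, N x -> N y -> N (gmul x y)) /\
      (forall x, N x -> N (ginv x)),
      closed N, connected N &
      (forall (r : R) x, 0 < r -> N x -> N (gdil M r x))].

Definition normal_subgroup (R : realType) (M : graded_group R)
  (N : set (gcar M)) :=
  forall g x, N x -> N (gmul (gmul g x) (ginv g)).

Definition complementary (R : realType) (M : graded_group R)
  (N H : set (gcar M)) :=
  (forall m, exists n h, [/\ N n, H h & m = gmul n h]) /\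
  (forall x, N x -> H x -> x = 0).

(* p : M -> H is an h-epimorphism onto the homogeneous subgroup H (with the
   graded structure of M restricted to H): p is an h-homomorphism with values
   in H, having a right inverse s : H -> M which is an h-homomorphism. *)
Definition hepi_onto (R : realType) (M : graded_group R)
  (H : set (gcar M)) (p : gcar M -> gcar M) :=
  [/\ hhom p, (forall m, H (p m)) &
      exists s : gcar M -> gcar M,
        [/\ (forall x y, H x -> H y -> s (gmul x y) = gmul (s x) (s y)),
            (forall (r : R) x, 0 < r -> H x -> s (gdil M r x) = gdil M r (s x))
          & (forall h, H h -> p (s h) = h)]].

(* Main.v *)
Require Import Defs.
From HB Require Import structures.
From mathcomp Require Import all_boot all_order all_algebra.
From mathcomp Require Import all_classical all_reals all_analysis.
From mathcomp Require Import zify ring lra.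
Import Order.TTheory GRing.Theory Num.Theory.
Import numFieldNormedType.Exports.
Local Open Scope classical_set_scope.
Local Open Scope ring_scope.

Section Basic.
Variables (R : realType) (G : graded_group R).

Lemma gcancel_l (a x y : gcar G) : gmul a x = gmul a y -> x = y.
Proof.
move=> h; rewrite -(gmul0x x) -(gmul0x y) -(gmulVx a) -!gmulA.
by rewrite h.
Qed.

Lemma gcancel_r (a x y : gcar G) : gmul x a = gmul y a -> x = y.
Proof.
move=> h; rewrite -(gmulx0 x) -(gmulx0 y) -(gmulxV a) !gmulA.
by rewrite h.
Qed.

Lemma ginv0 : ginv (0 : gcar G) = 0.
Proof. by rewrite -[LHS](gmul0x) gmulxV. Qed.

Lemma ginvK (x : gcar G) : ginv (ginv x) = x.
Proof. by apply: (@gcancel_l (ginv x)); rewrite gmulxV gmulVx. Qed.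

Lemma ginvM (x y : gcar G) : ginv (gmul x y) = gmul (ginv y) (ginv x).
Proof.
apply: (@gcancel_l (gmul x y)); rewrite gmulxV gmulA -(gmulA x y).
by rewrite gmulxV gmulx0 gmulxV.
Qed.

Lemma conj_aux (a b c d : gcar G) : gmul (gmul a b) (gmul c d) =
  gmul (gmul a (gmul (gmul b c) (ginv b))) (gmul b d).
Proof. by rewrite -!gmulA (gmulA (ginv b) b d) gmulVx gmul0x. Qed.

End Basic.

Section Hom.
Variables (R : realType) (G M : graded_group R) (f : gcar G -> gcar M).
Hypothesis hf : hhom f.

Lemma hom0 : f 0 = 0.
Proof.
apply: (@gcancel_l _ _ (f 0)); rewrite -hf.1 !gmulx0; done.
Qed.

Lemma homV x : f (ginv x) = ginv (f x).
Proof.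
apply: (@gcancel_l _ _ (f x)); rewrite -hf.1 !gmulxV; exact: hom0.
Qed.

End Hom.
Arguments hom0 {R G M f}.
Arguments homV {R G M f}.


Lemma poly_pos_roots (R : realType) (p : {poly R}) :
  (forall r : R, 0 < r -> p.[r] = 0) -> p = 0.
Proof.
move=> h; apply/eqP; apply/negPn/negP => p0.
pose rs := [seq (i.+1)%:R : R | i <- iota 0 (size p)].
have h1 : all (root p) rs.
  apply/allP => x /mapP[i _ ->]; apply/rootP; apply: h; exact: ltr0Sn.
have h2 : uniq rs.
  by rewrite map_inj_uniq ?iota_uniq // => i j /eqP; rewrite eqr_nat => /eqP[].
have := max_poly_roots p0 h1 h2.
by rewrite size_map size_iota ltnn.
Qed.

Section PolyStruct.
Variables (R : realType) (m : nat) (wt : 'I_m -> nat).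
Hypothesis wpos : forall i, (0 < wt i)%N.

Definition mono (a : 'I_m -> nat) (z : 'rV[R]_m) : R := \prod_i z 0 i ^+ a i.
Definition evalL (L : seq (R * ('I_m -> nat))) z := \sum_(p <- L) p.1 * mono p.2 z.
Definition wd (a : 'I_m -> nat) : nat := (\sum_i a i * wt i)%N.

Lemma mono_delta k z : mono (fun i => (i == k) : nat) z = z 0 k.
Proof.
rewrite /mono (bigD1 k) //= eqxx expr1 big1 ?mulr1 // => i /negbTE ->.
by rewrite expr0.
Qed.

Lemma monoD a b z : mono (fun i => (a i + b i)%N) z = mono a z * mono b z.
Proof. by rewrite /mono -big_split; apply: eq_bigr => i _; rewrite exprD. Qed.

Lemma polyfn_repr F : polyfn F -> exists L, forall z, F z = evalL L z.
Proof.
elim => [c|k|f g _ [L1 h1] _ [L2 h2]|f g _ [L1 h1] _ [L2 h2]].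
- exists [:: (c, fun _ => 0%N)] => z; rewrite /evalL big_seq1 /mono /=.
  by rewrite big1 ?mulr1 // => i _; rewrite expr0.
- exists [:: (1, fun i => (i == k) : nat)] => z.
  by rewrite /evalL big_seq1 /= mul1r mono_delta.
- by exists (L1 ++ L2) => z; rewrite h1 h2 /evalL big_cat.
- exists [seq (p.1 * q.1, fun i => (p.2 i + q.2 i)%N) | p <- L1, q <- L2] => z.
  rewrite h1 h2 /evalL big_allpairs_dep /= mulr_suml; apply: eq_bigr => p _.
  rewrite mulr_sumr; apply: eq_bigr => q _ /=.
  by rewrite monoD; ring.
Qed.

Lemma mono_dil a r z : mono a (dilw wt r z) = r ^+ wd a * mono a z.
Proof.
rewrite /mono /wd -prodrXr -big_split; apply: eq_bigr => i _ /=.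
by rewrite mxE exprMn -exprM mulnC.
Qed.

Lemma homog_filter L w z :
  (forall r, 0 < r -> evalL L (dilw wt r z) = r ^+ w * evalL L z) ->
  evalL L z = evalL [seq p <- L | wd p.2 == w] z.
Proof.
move=> h.
pose P : {poly R} := \sum_(p <- L) (p.1 * mono p.2 z) *: 'X^(wd p.2) - (evalL L z) *: 'X^w.
have P0 : P = 0.
  apply: poly_pos_roots => r r0.
  rewrite /P hornerD hornerN horner_sum hornerZ hornerXn (mulrC (evalL L z)) -h //.
  rewrite /evalL; apply/eqP; rewrite subr_eq0; apply/eqP; apply: eq_bigr => p _.
  by rewrite hornerZ hornerXn mono_dil; ring.
have := congr1 (fun q : {poly R} => q`_w) P0.
rewrite /P coefB coef_sum coefZ coefXn eqxx mulr1 coef0 => /eqP; rewrite subr_eq0 => /eqP <-.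
rewrite /evalL big_filter [RHS]big_mkcond; apply: eq_bigr => p _.
by rewrite coefZ coefXn eq_sym; case: eqP; rewrite ?mulr1 ?mulr0.
Qed.

Lemma wd_high a w k : wd a = w -> (w <= wt k)%N -> (0 < a k)%N ->
  (forall i, a i = (i == k) :> nat).
Proof.
rewrite /wd (bigD1 k) //= => e hk ak.
set S := (\sum_(i < m | i != k) a i * wt i)%N in e.
have wk := wpos k.
have S0 : S = 0%N by nia.
have ak1 : a k = 1%N by nia.
move=> i; case: eqP => [->//|/eqP ik].
move/eqP: S0; rewrite sum_nat_eq0 => /forallP /(_ i); rewrite ik /= muln_eq0.
have := wpos i; case: (a i) => // n; case: (wt i) => //.
Qed.

Lemma mono_split a w (z v : 'rV[R]_m) : wd a = w -> (forall i, (wt i < w)%N -> v 0 i = 0) ->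
  mono a (z + v) = mono a z + mono a v - mono a 0.
Proof.
move=> e hv.
case: (boolP [exists k, (w <= wt k)%N && (0 < a k)%N]).
- move=> /existsP[k /andP[hk ak]].
  have ha := @wd_high a w k e hk ak.
  have -> : mono a = mono (fun i => (i == k) : nat).
    by apply: funext => u; apply: eq_bigr => i _; rewrite ha.
  by rewrite !mono_delta !mxE; ring.
- rewrite negb_exists => /forallP hn.
  have hz : forall u, mono a (u + v) = mono a u.
    move=> u; apply: eq_bigr => i _; rewrite mxE.
    case: (posnP (a i)) => [->|ai]; first by rewrite !expr0.
    have := hn i; rewrite ai andbT -ltnNge => /hv ->; by rewrite addr0.
  have := hz 0; rewrite add0r => ->; rewrite hz; ring.
Qed.

Lemma poly_split (F : 'rV[R]_m -> R) w : polyfn F ->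
  (forall r z, 0 < r -> F (dilw wt r z) = r ^+ w * F z) ->
  forall z v : 'rV[R]_m, (forall i, (wt i < w)%N -> v 0 i = 0) -> F (z + v) = F z + F v - F 0.
Proof.
move=> hF hom z v hv; have [L hL] := @polyfn_repr F hF.
have E : forall u, F u = evalL [seq p <- L | wd p.2 == w] u.
  move=> u; rewrite hL; apply: homog_filter => r r0; rewrite -!hL; exact: hom.
rewrite !E /evalL -big_split -sumrB /= big_seq [RHS]big_seq.
apply: eq_bigr => p; rewrite mem_filter => /andP[/eqP hp _].
rewrite (@mono_split p.2 w z v hp hv); ring.
Qed.

End PolyStruct.

Section Tri.
Variables (R : realType) (G : graded_group R).
Local Notation n := (gdim G).
Local Notation wt := (@gwt R G).

Definition wt2 (i : 'I_(n + n)) : nat :=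
  match fintype.split i with inl a => wt a | inr b => wt b end.

Lemma wt2_pos i : (0 < wt2 i)%N.
Proof. by rewrite /wt2; case: (fintype.split i) => k; exact: gwt_pos. Qed.

Definition Fj (j : 'I_n) (z : 'rV[R]_(n + n)) : R :=
  (gmul (lsubmx z) (rsubmx z) : 'rV[R]_n) 0 j.

Lemma Fj_poly j : polyfn (Fj j).
Proof. exact: gmul_poly. Qed.

Lemma lsub_dil r (z : 'rV[R]_(n + n)) : lsubmx (dilw wt2 r z) = dilw wt r (lsubmx z).
Proof.
apply/matrixP => i k; rewrite !mxE /wt2.
by rewrite (unsplitK (inl _ k)).
Qed.

Lemma rsub_dil r (z : 'rV[R]_(n + n)) : rsubmx (dilw wt2 r z) = dilw wt r (rsubmx z).
Proof.
apply/matrixP => i k; rewrite !mxE /wt2.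
by rewrite (unsplitK (inr _ k)).
Qed.

Lemma Fj_hom j r z : 0 < r -> Fj j (dilw wt2 r z) = r ^+ wt j * Fj j z.
Proof.
move=> r0; rewrite /Fj lsub_dil rsub_dil -gdil_mul //.
by rewrite mxE.
Qed.

Lemma Fj_split j (z v : 'rV[R]_(n + n)) : (forall i, (wt2 i < wt j)%N -> v 0 i = 0) ->
  Fj j (z + v) = Fj j z + Fj j v - Fj j 0.
Proof.
move=> hv; apply: (@poly_split _ _ wt2 wt2_pos (Fj j) (wt j) (Fj_poly j)) => //.
move=> r u r0; exact: Fj_hom.
Qed.

Lemma Fj_row j (x y : 'rV[R]_n) : Fj j (row_mx x y) = (gmul x y : 'rV[R]_n) 0 j.
Proof. by rewrite /Fj row_mxKl row_mxKr. Qed.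

Lemma Fj0 j : Fj j 0 = 0.
Proof. by rewrite -row_mx0 Fj_row gmul0x mxE. Qed.

Lemma cond_row j (p q : 'rV[R]_n) :
  (forall k, (wt k < wt j)%N -> p 0 k = 0) -> (forall k, (wt k < wt j)%N -> q 0 k = 0) ->
  forall i, (wt2 i < wt j)%N -> (row_mx p q) 0 i = 0.
Proof.
move=> hp hq i; rewrite mxE /wt2; case: (fintype.split i) => k h.
- exact: hp.
- exact: hq.
Qed.

Lemma gmul_tri j (x y x' y' : 'rV[R]_n) :
  (forall i, (wt i < wt j)%N -> x 0 i = x' 0 i) ->
  (forall i, (wt i < wt j)%N -> y 0 i = y' 0 i) ->
  (gmul x' y' : 'rV[R]_n) 0 j =
    (gmul x y : 'rV[R]_n) 0 j + (x' 0 j - x 0 j) + (y' 0 j - y 0 j).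
Proof.
move=> hx hy.
have hv : forall i, (wt2 i < wt j)%N -> (row_mx (x' - x) (y' - y)) 0 i = 0.
  by apply: cond_row => k hk; rewrite !mxE ?hx ?hy // subrr.
have e1 := @Fj_split j (row_mx x y) _ hv.
rewrite add_row_mx !(addrC _ (_ - _)) !subrK !Fj_row Fj0 subr0 in e1.
rewrite e1.
have hv2 : forall i, (wt2 i < wt j)%N -> (row_mx 0 (y' - y)) 0 i = 0.
  by apply: cond_row => k hk; rewrite !mxE ?hy // subrr.
have e2 := @Fj_split j (row_mx (x' - x) 0) _ hv2.
rewrite add_row_mx add0r addr0 !Fj_row Fj0 subr0 gmulx0 gmul0x in e2.
rewrite e2 !mxE; ring.
Qed.

End Tri.

Lemma mx_cont (R: realType) (T : topologicalType) m n (f : T -> 'M[R]_(m,n)) :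
  (forall i j, continuous (fun t => f t i j)) -> continuous f.
Proof.
move=> H t; apply/cvg_ballP => e e0.
have : \forall s \near t, forall ij : 'I_m * 'I_n, ball (f t ij.1 ij.2) e (f s ij.1 ij.2).
  apply: filter_forall => ij; exact: (cvg_ball (H ij.1 ij.2 t) e0).
apply: filterS => s hs; split => // i j; exact: (hs (i,j)).
Qed.

Lemma entry_cont {R: realType} {m n} i j : continuous (fun M : 'M[R]_(m,n) => M i j).
Proof.
move=> M A /= hA.
exists (fun i' j' => if (i' == i) && (j' == j) then A else setT).
- move=> i' j'; case: ifP => [/andP[/eqP-> /eqP->]|_]; [exact hA | exact: filterT].
- by move=> N hN; have := hN i j; rewrite !eqxx.
Qed.

Lemma closed_set0 (R : realType) n : closed [set (0 : 'rV[R]_n)].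
Proof. apply: accessible_closed_set1. apply: hausdorff_accessible. exact: norm_hausdorff. Qed.

Lemma contM (R : realType) (T : topologicalType) (f g : T -> R) :
  continuous f -> continuous g -> continuous (fun t => f t * g t).
Proof. by move=> hf hg x; exact: (continuousM (hf x) (hg x)). Qed.

Lemma contD (R : realType) (T : topologicalType) (f g : T -> R) :
  continuous f -> continuous g -> continuous (fun t => f t + g t).
Proof. by move=> hf hg x; exact: (continuousD (hf x) (hg x)). Qed.

Lemma dilw1 (R : realType) n (w : 'I_n -> nat) (x : 'rV[R]_n) : dilw w 1 x = x.
Proof. by apply/matrixP => i j; rewrite !mxE ord1 expr1n mul1r. Qed.

Lemma dilw0 (R : realType) n (w : 'I_n -> nat) (x : 'rV[R]_n) :
  (forall i, (0 < w i)%N) -> dilw w 0 x = 0.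
Proof.
by move=> wp; apply/matrixP => i j; rewrite !mxE expr0n eqn0Ngt wp mul0r.
Qed.

Lemma dilw_cont (R : realType) n (w : 'I_n -> nat) (x : 'rV[R]_n) :
  continuous (fun r : R => dilw w r x).
Proof.
apply: mx_cont => i j /=; rewrite /dilw.
under eq_fun do rewrite mxE.
apply: contM; last exact: cst_continuous.
exact: exprn_continuous.
Qed.

Lemma dil_connected (R : realType) (M : graded_group R) (N : set (gcar M)) :
  N 0 -> (forall (r : R) x, 0 < r -> N x -> N (gdil M r x)) -> connected N.
Proof.
move=> N0 ND.
have -> : N = \bigcup_(x in N) ((fun r : R => (dilw (@gwt R M) r x : 'rV[R]_(gdim M))) @` `[0, 1]).
  apply/seteqP; split.
  - move=> x Nx; exists x => //; exists 1; last exact: dilw1.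
    by rewrite /= in_itv/= ler01 lexx.
  - move=> y [x Nx [r r01 <-]].
    have [->|r0] := eqVneq r 0; first by rewrite dilw0 //; exact: gwt_pos.
    apply: ND => //; rewrite lt0r r0 /=.
    by move: r01; rewrite /= in_itv/= => /andP[].
apply: bigcup_connected.
  exists 0 => x Nx; exists 0; last by rewrite dilw0 //; exact: gwt_pos.
  by rewrite /= in_itv/= lexx ler01.
move=> x Nx; apply: connected_continuous_connected; first exact: segment_connected.
apply: continuous_subspaceT; exact: dilw_cont.
Qed.

Lemma contC {T U V : topologicalType} {f : T -> U} {g : U -> V} :
  continuous f -> continuous g -> continuous (fun t => g (f t)).
Proof. by move=> hf hg x; exact: (continuous_comp (hf x) (hg (f x))). Qed.

Lemma polyfn_cont (R : realType) m (F : 'rV[R]_m -> R) : polyfn F -> continuous F.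
Proof.
elim => [c|i|f g _ hf _ hg|f g _ hf _ hg].
- exact: cst_continuous.
- exact: entry_cont.
- exact: contD.
- exact: contM.
Qed.

Lemma row_mx_cont {R : realType} {T : topologicalType} {m n} {a : T -> 'rV[R]_m} {b : T -> 'rV[R]_n} :
  continuous a -> continuous b -> continuous (fun t => row_mx (a t) (b t)).
Proof.
move=> ha hb; apply: mx_cont => i j.
under eq_fun do rewrite mxE.
case: (fintype.split j) => k.
- exact: (contC ha (entry_cont i k)).
- exact: (contC hb (entry_cont i k)).
Qed.

Section GCont.
Variables (R : realType) (G : graded_group R).

Lemma gmul_cont (T : topologicalType) (a b : T -> 'rV[R]_(gdim G)) :
  continuous a -> continuous b -> continuous (fun t => (gmul (a t) (b t) : 'rV[R]_(gdim G))).
Proof.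
move=> ha hb.
have hF : continuous (fun z : 'rV[R]_(gdim G + gdim G) => (gmul (lsubmx z) (rsubmx z) : 'rV[R]_(gdim G))).
  apply: mx_cont => i j; rewrite ord1; apply: polyfn_cont; exact: gmul_poly.
have := contC (row_mx_cont ha hb) hF.
by under eq_fun do rewrite row_mxKl row_mxKr.
Qed.

Lemma ginv_cont : continuous (fun x : 'rV[R]_(gdim G) => (ginv x : 'rV[R]_(gdim G))).
Proof.
apply: mx_cont => i j; rewrite ord1; apply: polyfn_cont; exact: ginv_poly.
Qed.

End GCont.

Lemma rho_cont (R : realType) (a : R) : 0 < a ->
  continuous (fun s : R => (Num.max s 0) `^ a).
Proof.
move=> a0 s0.
have [s0p|s0n] := ltP 0 s0.
- have e : {near s0, (fun s => expR (a * ln s)) =1 (fun s => Num.max s 0 `^ a)}.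
    apply: filterS (lt_nbhsr s0p) => s /= sp.
    by rewrite /powR (max_idPl (ltW sp)) gt_eqF.
  rewrite /continuous_at.
  apply: (cvg_trans (near_eq_cvg e)).
  have -> : Num.max s0 0 `^ a = expR (a * ln s0).
    by rewrite /powR (max_idPl (ltW s0p)) gt_eqF.
  have h1 : {for s0, continuous (fun s => a * ln s)}.
    by apply: continuousM; [exact: cst_continuous | exact: continuous_ln].
  exact: (continuous_comp h1 (@continuous_expR R (a * ln s0))).
- rewrite /continuous_at.
  have -> : Num.max s0 0 `^ a = 0 by rewrite (max_idPr s0n) powR0 // gt_eqF.
  apply/cvgrPdist_lt => e e0.
  set d := e `^ a^-1.
  have d0 : 0 < d by rewrite /d powR_gt0.
  have hd : \forall s \near s0, `|s0 - s| < d.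
    exact: (@cvgr_dist_lt _ _ _ (nbhs s0) _ (fun s => s) s0 (@cvg_id _ _) d d0).
  apply: filterS hd => s hs.
  rewrite sub0r normrN ger0_norm ?powR_ge0 //.
  have hm : Num.max s 0 < d.
    have [s0'|sn] := leP s 0; first by [].
    apply: le_lt_trans hs.
    rewrite distrC ger0_norm; lra.
  have m0 : Num.max s 0 \in Num.nneg by rewrite nnegrE le_max lexx orbT.
  have dn : d \in Num.nneg by rewrite nnegrE ltW.
  have := @gt0_ltr_powR _ a a0 (Num.max s 0) d m0 dn hm.
  by rewrite /d -powRrM mulVf ?gt_eqF // powRr1 // ltW.
Qed.

Definition ei {R : realType} {n} (i : 'I_n) (t : R) : 'rV[R]_n := \row_k (t * (k == i)%:R).

Lemma ei_cont (R : realType) (T : topologicalType) n (i : 'I_n) (g : T -> R) :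
  continuous g -> continuous (fun t => ei i (g t)).
Proof.
move=> hg; apply: mx_cont => a k; under eq_fun do rewrite mxE.
by apply: contM => //; exact: cst_continuous.
Qed.

Lemma mx_contB (R : realType) (T : topologicalType) m n (A B : T -> 'M[R]_(m,n)) :
  continuous A -> continuous B -> continuous (fun t => A t - B t).
Proof.
move=> hA hB; apply: mx_cont => i j; under eq_fun do rewrite !mxE.
apply: contD; first exact: (contC hA (entry_cont i j)).
exact: (contC (contC hB (entry_cont i j)) oppr_continuous).
Qed.

Section PhiSec.
Variables (R : realType) (G : graded_group R).
Local Notation n := (gdim G).
Local Notation wt := (@gwt R G).

Definition PhiR (s : seq 'I_n) (t : 'rV[R]_n) : 'rV[R]_n :=
  foldr (fun i acc => (gmul (ei i (t 0 i)) acc : 'rV[R]_n)) 0 s.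

Lemma Phi_tri s : forall j (t t' : 'rV[R]_n),
  (forall i, (wt i < wt j)%N -> t 0 i = t' 0 i) ->
  PhiR s t' 0 j - (count_mem j s)%:R * t' 0 j = PhiR s t 0 j - (count_mem j s)%:R * t 0 j.
Proof.
elim: s => [|i s IH] j t t' h /=; first by rewrite !mxE !mul0r.
have hx : forall l, (wt l < wt j)%N -> ei i (t 0 i) 0 l = ei i (t' 0 i) 0 l.
  move=> l hl; rewrite !mxE; case: eqP => [e|_]; last by rewrite !mulr0.
  by rewrite h // -e.
have hy : forall l, (wt l < wt j)%N -> PhiR s t 0 l = PhiR s t' 0 l.
  move=> l hl.
  have := IH l t t' (fun i hi => h i (ltn_trans hi hl)).
  rewrite (h l hl) => e; by apply: (addIr (- ((count_mem l s)%:R * t' 0 l))); rewrite e.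
rewrite (@gmul_tri R G j _ _ _ _ hx hy).
move: (IH j t t' h); rewrite natrD !mxE.
case: (eqVneq i j) => [->|ij].
- rewrite /= ?mulr1; lra.
- rewrite /= ?mulr0 ?add0r.
  lra.
Qed.

Definition Phi t := PhiR (enum 'I_n) t.
Definition Pd t : 'rV[R]_n := Phi t - t.

Lemma Pd_low j (t t' : 'rV[R]_n) :
  (forall i, (wt i < wt j)%N -> t 0 i = t' 0 i) -> Pd t 0 j = Pd t' 0 j.
Proof.
move=> h; have := Phi_tri (enum 'I_n) j t t' h.
rewrite count_uniq_mem ?enum_uniq // mem_enum /= !mxE.
lra.
Qed.

Definition Wmax : nat := (\sum_i wt i)%N.

Lemma wt_le_W j : (wt j <= Wmax)%N.
Proof. by rewrite /Wmax (bigD1 j) //= leq_addr. Qed.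

Definition Gx (x t : 'rV[R]_n) : 'rV[R]_n := x - Pd t.

Lemma iter_agree x l : forall j, (wt j <= l)%N ->
  (iter l (Gx x) x) 0 j = (iter l.+1 (Gx x) x) 0 j.
Proof.
elim: l => [|l IH] j hj.
- by have := gwt_pos j; rewrite leqNgt; move: hj; rewrite leqn0 => /eqP ->.
- have GxE : forall t, Gx x t 0 j = x 0 j - Pd t 0 j by move=> t; rewrite /Gx /Pd !mxE.
  rewrite [iter l.+1 _ _]iterS [iter l.+2 _ _]iterS !GxE.
  congr (_ - _); apply: (@Pd_low j) => i hi; apply: IH.
  by rewrite -ltnS; apply: leq_trans hi hj.
Qed.

Definition Psi (x : 'rV[R]_n) : 'rV[R]_n := iter Wmax (Gx x) x.

Lemma PhiPsi x : Phi (Psi x) = x.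
Proof.
have e : Gx x (Psi x) = Psi x.
  apply/matrixP => a j; rewrite ord1 /Psi -iterS; symmetry; apply: iter_agree.
  exact: wt_le_W.
move: e; rewrite /Gx /Pd => e.
apply/matrixP => a j; have := congr1 (fun M : 'rV[R]_n => M a j) e.
rewrite !mxE; lra.
Qed.

Lemma PhiR_cont s : continuous (PhiR s).
Proof.
elim: s => [|i s IH] /=; first exact: cst_continuous.
apply: gmul_cont => //; apply: ei_cont; exact: entry_cont.
Qed.

Lemma Psi_cont_gen l : continuous (fun x => iter l (Gx x) x).
Proof.
elim: l => [|l IH] /=; first by move=> x; exact: cvg_id.
rewrite /Gx /Pd /Phi; apply: mx_contB; first by move=> x; exact: cvg_id.
apply: mx_contB => //; exact: contC IH (PhiR_cont _).
Qed.

Lemma Psi_cont : continuous Psi.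
Proof. exact: Psi_cont_gen. Qed.

End PhiSec.

Lemma mx_contD (R : realType) (T : topologicalType) m n (A B : T -> 'M[R]_(m,n)) :
  continuous A -> continuous B -> continuous (fun t => A t + B t).
Proof.
move=> hA hB; apply: mx_cont => i j; under eq_fun do rewrite !mxE.
apply: contD; [exact: (contC hA (entry_cont i j))|exact: (contC hB (entry_cont i j))].
Qed.

Lemma dilw_ei (R : realType) n (w : 'I_n -> nat) (r c : R) i :
  dilw w r (ei i c) = ei i (r ^+ w i * c).
Proof.
apply/matrixP => a k; rewrite !mxE; case: eqP => [->|_]; by rewrite ?mulr0 ?mulr1.
Qed.

Lemma rho_pow (R : realType) (u : R) (w : nat) : (0 < w)%N -> 0 <= u ->
  (u `^ (w%:R)^-1) ^+ w = u.
Proof.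
move=> w0 u0; rewrite -powR_mulrn ?powR_ge0 // -powRrM mulVf ?powRr1 //.
by rewrite pnatr_eq0 -lt0n.
Qed.

Lemma ei0 (R : realType) n (i : 'I_n) : ei i (0 : R) = 0.
Proof. by apply/matrixP => a k; rewrite !mxE mul0r. Qed.

Section Line.
Variables (R : realType) (G M : graded_group R) (f : gcar G -> gcar M).
Hypothesis hf : hhom f.

Let fd r x : 0 < r -> f (dilw (@gwt R G) r x) = dilw (@gwt R M) r (f x).
Proof. exact: hf.2. Qed.

Definition rho (i : 'I_(gdim G)) (u : R) := (Num.max u 0) `^ ((@gwt R G i)%:R^-1).

Lemma rho_neg i u : u <= 0 -> rho i u = 0.
Proof.
move=> u0; rewrite /rho (max_idPr u0) powR0 // invr_eq0 pnatr_eq0 -lt0n.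
exact: gwt_pos.
Qed.

Lemma line_eq i s : (f (ei i s) : 'rV[R]_(gdim M)) =
  dilw (@gwt R M) (rho i s) (f (ei i 1)) + dilw (@gwt R M) (rho i (- s)) (f (ei i (-1))).
Proof.
have wp := gwt_pos i.
have wM := @gwt_pos R M.
case: (ltgtP s 0) => hs.
- rewrite (@rho_neg i s (ltW hs)) dilw0 // add0r.
  have ns : 0 < - s by rewrite oppr_gt0.
  have r0 : 0 < rho i (- s) by rewrite /rho powR_gt0 // (max_idPl (ltW ns)).
  have e : ei i s = dilw (@gwt R G) (rho i (- s)) (ei i (-1)).
    by rewrite dilw_ei /rho (max_idPl (ltW ns)) rho_pow ?(ltW ns) // mulrN1 opprK.
  by rewrite e fd.
- have ns : - s <= 0 by rewrite oppr_le0 ltW.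
  rewrite (@rho_neg i (- s) ns) dilw0 // addr0.
  have r0 : 0 < rho i s by rewrite /rho powR_gt0 // (max_idPl (ltW hs)).
  have e : ei i s = dilw (@gwt R G) (rho i s) (ei i 1).
    by rewrite dilw_ei /rho (max_idPl (ltW hs)) rho_pow ?(ltW hs) // mulr1.
  by rewrite e fd.
- rewrite hs oppr0 (@rho_neg i 0 (lexx _)) !dilw0 // addr0 ei0.
  exact: hom0.
Qed.

Lemma rho_cont' i : continuous (rho i).
Proof.
apply: rho_cont; rewrite invr_gt0 ltr0n; exact: gwt_pos.
Qed.

Lemma line_cont i : continuous (fun s : R => (f (ei i s) : 'rV[R]_(gdim M))).
Proof.
have -> : (fun s : R => (f (ei i s) : 'rV[R]_(gdim M))) = (fun s =>
  dilw (@gwt R M) (rho i s) (f (ei i 1)) + dilw (@gwt R M) (rho i (- s)) (f (ei i (-1)))).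
  by apply: funext => s; exact: line_eq.
apply: mx_contD.
- exact: (contC (rho_cont' i) (@dilw_cont R _ (@gwt R M) _)).
- exact: (contC (contC oppr_continuous (rho_cont' i)) (@dilw_cont R _ (@gwt R M) _)).
Qed.

Lemma fPhi_cont s : continuous (fun t : 'rV[R]_(gdim G) => (f (@PhiR R G s t) : 'rV[R]_(gdim M))).
Proof.
elim: s => [|i s IH] /=.
- have -> : (fun t : 'rV[R]_(gdim G) => (f 0 : 'rV[R]_(gdim M))) = fun=> 0.
    by apply: funext => t; exact: hom0.
  exact: cst_continuous.
- have -> : (fun t : 'rV[R]_(gdim G) => (f (gmul (ei i (t 0 i)) (@PhiR R G s t)) : 'rV[R]_(gdim M))) =
     fun t => gmul (f (ei i (t 0 i))) (f (@PhiR R G s t)).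
    by apply: funext => t; exact: hf.1.
  apply: gmul_cont => //.
  exact: (contC (entry_cont 0 i) (line_cont i)).
Qed.

Lemma hhom_cont : continuous (f : 'rV[R]_(gdim G) -> 'rV[R]_(gdim M)).
Proof.
have -> : (f : 'rV[R]_(gdim G) -> 'rV[R]_(gdim M)) = fun x => f (@Phi R G (@Psi R G x)).
  by apply: funext => x; rewrite PhiPsi.
exact: (contC (@Psi_cont R G) (fPhi_cont _)).
Qed.

End Line.

Lemma hhom_continuous {R : realType} {G M : graded_group R} {f : gcar G -> gcar M} :
  hhom f -> continuous (f : 'rV[R]_(gdim G) -> 'rV[R]_(gdim M)).
Proof. move=> hf; exact: (@hhom_cont R G M f hf). Qed.

Theorem proposition7p18 (R : realType) (G M : graded_group R)
  (T : gcar G -> gcar M) :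
  hhom T -> injective T ->
  let H := range T in
  ((exists N : set (gcar M),
      [/\ homogeneous_subgroup N, normal_subgroup N & complementary N H])
   <->
   (exists p : gcar M -> gcar M,
      hepi_onto H p /\ (forall h, H h -> p h = h)))
  /\
  ((exists p : gcar M -> gcar M,
      hepi_onto H p /\ (forall h, H h -> p h = h))
   <-> hmono T).
Proof.
move=> hT injT H.
have HM : forall x y, H x -> H y -> H (gmul x y).
  by move=> _ _ [a _ <-] [b _ <-]; exists (gmul a b) => //; rewrite hT.1.
have HV : forall x, H x -> H (ginv x).
  by move=> _ [a _ <-]; exists (ginv a) => //; rewrite (homV hT).
have HD : forall (r : R) x, 0 < r -> H x -> H (gdil M r x).
  by move=> r _ r0 [a _ <-]; exists (gdil G r a) => //; rewrite hT.2.
split; split.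
- move=> [N [[N0 [NM NV] Ncl Ncon ND] Nn [Ncov Ncap]]].
  have uniq : forall n h n' h', N n -> H h -> N n' -> H h' ->
      gmul n h = gmul n' h' -> h = h'.
    move=> n h n' h' Nn1 Hh Nn' Hh' e.
    have e2 : gmul (ginv n') n = gmul h' (ginv h).
      rewrite -[n in LHS](gmulx0 n) -(gmulxV h) (gmulA n h) e.
      by rewrite -(gmulA n' h') (gmulA (ginv n')) gmulVx gmul0x.
    have : gmul h' (ginv h) = 0.
      by apply: Ncap; [rewrite -e2; apply: NM => //; apply: NV|apply: HM => //; apply: HV].
    move=> e3; apply: (@gcancel_r _ _ (ginv h)); by rewrite e3 gmulxV.
  have [p Hp] := choice (fun m => let: ex_intro n (ex_intro h P) := Ncov m in
     ex_intro (fun h => exists n, [/\ N n, H h & m = gmul n h]) h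
       (ex_intro _ n P)).
  have pE : forall m n h, N n -> H h -> m = gmul n h -> p m = h.
    move=> m n h Nn1 Hh ->; have [n' [Nn' Hp' e]] := Hp (gmul n h).
    by apply: (uniq n' _ n) => //; rewrite -e.
  have pH : forall h, H h -> p h = h.
    by move=> h Hh; apply: (pE h 0) => //; rewrite gmul0x.
  exists p; split => //; split.
  + split.
    * move=> x y; have [n1 [N1 H1 e1]] := Hp x; have [n2 [N2 H2 e2]] := Hp y.
      apply: (pE _ (gmul n1 (gmul (gmul (p x) n2) (ginv (p x))))).
      - by apply: NM => //; apply: Nn.
      - by apply: HM.
      by rewrite {1}e1 {1}e2 conj_aux.
    * move=> r x r0; have [n1 [N1 H1 e1]] := Hp x.
      apply: (pE _ (gdil M r n1)); [exact: ND|exact: HD|].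
      by rewrite {1}e1 /gdil gdil_mul.
  + by move=> m; have [n1 [N1 H1 e1]] := Hp m.
  + by exists id; split.
- move=> [p [[hp pH' [s [_ _ ps]]] pH]].
  exists [set m | p m = 0]; split; [split|..].
  + exact: hom0.
  + split.
    * by move=> x y /= px py; rewrite hp.1 px py gmul0x.
    * by move=> x /= px; rewrite (homV hp) px ginv0.
  + have pc := hhom_continuous hp.
    apply: (@preimage_closed _ _ (p : 'rV[R]_(gdim M) -> 'rV[R]_(gdim M)) [set 0]); last exact: closed_set0.
    by move=> x _; apply: pc.
  + apply: dil_connected; first exact: hom0.
    by move=> r x r0 /= px; rewrite hp.2 // px /gdil /dilw; apply/matrixP => i j; rewrite !mxE mulr0.
  + by move=> r x r0 /= px; rewrite hp.2 // px /gdil /dilw; apply/matrixP => i j; rewrite !mxE mulr0.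
  + move=> g x /= px; rewrite !hp.1 px gmulx0 (homV hp).
    exact: gmulxV.
  + split.
    * move=> m; exists (gmul m (ginv (p m))), (p m); split => //.
      - by rewrite /= hp.1 (homV hp) (pH (p m) (pH' m)) gmulxV.
      - by rewrite -gmulA gmulVx gmulx0.
    * by move=> x /= px Hx; rewrite -(pH x Hx).
- move=> [p [[hp pH' _] pH]].
  have ex : forall m, exists x, T x = p m by move=> m; have [x _ e] := pH' m; exists x.
  have [g Hg] := choice ex.
  have gT : forall x, g (T x) = x by move=> x; apply: injT; rewrite Hg pH //; exists x.
  split => //; exists g; split => //; split.
  + by move=> x y; apply: injT; rewrite hT.1 !Hg hp.1.
  + by move=> r x r0; apply: injT; rewrite hT.2 // !Hg hp.2.
- move=> [_ [g [hg gT]]].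
  exists (fun m => T (g m)); split; last by move=> _ [x _ <-]; rewrite gT.
  split.
  + by split => [x y|r x r0]; rewrite ?hg.1 ?hT.1 // hg.2 // hT.2.
  + by move=> m; exists (g m).
  + by exists id; split => // _ [x _ <-]; rewrite gT.
Qed.
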